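(* Let $\phi\colon R\to S$ be a morphism of restriction quantal frames. Then $B\mapsto\phi^{-1}(B)$ is a well-defined continuous covering functor $\phi^{-1}\colon\mathsf{C}(S)\to\mathsf{C}(R)$; in particular $\mathbf{d}(\phi^{-1}(B))=\phi^{-1}(\mathbf{d}(B))$ and $\mathbf{r}(\phi^{-1}(B))=\phi^{-1}(\mathbf{r}(B))$ for every completely prime filter $B$ of $S$.
   Context: A restriction quantal frame is a frame $(Q,\le)$ with associative multiplication distributing over arbitrary joins on both sides, which is a monoid with identity $e$ and carries join-preserving unary operations $a\mapsto a^{\ast}$, $a\mapsto a^{+}$ with values in the set $e^{\downarrow}=\{x:x\le e\}$ of projections (a commutative subsemigroup of idempotents), fixing projections, with $aa^{\ast}=a$, $a^{+}a=a$, $(ab)^{\ast}=(a^{\ast}b)^{\ast}$, $(ab)^{+}=(ab^{+})^{+}$; the top element is a join of partial isometries ($a$ with $b\le a\Rightarrow b=b^{+}a=ab^{\ast}$) and partial isometries are closed under product. A morphism of restriction quantal frames is a semigroup homomorphism preserving all joins, finite meets, $\ast$ and $+$, the top element and the monoid identity, and mapping partial isometries to partial isometries. A completely prime filter is a nonempty upward closed subset closed under binary meets, not containing $0$, such that whenever $\bigvee_i a_i$ lies in it some $a_i$ does. $\mathsf{C}(Q)$ is the category of completely prime filters with $\mathbf{d}(A)=\{x:\exists a\in A,\ a^{\ast}\le x\}$, $\mathbf{r}(A)=\{x:\exists a\in A,\ a^{+}\le x\}$, $A\cdot B=\{x:\exists a\in A,b\in B,\ ab\le x\}$ defined iff $\mathbf{d}(A)=\mathbf{r}(B)$,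 topologized by the base $\mathscr{X}_a=\{A:a\in A\}$, $a$ a partial isometry. A functor $F$ is a covering functor if it is $\mathbf{d}$-injective ($F(x)=F(y)$, $\mathbf{d}(x)=\mathbf{d}(y)\Rightarrow x=y$), $\mathbf{d}$-surjective (if $F(e)=\mathbf{d}(y)$ for an identity $e$, there is $x$ with $\mathbf{d}(x)=e$, $F(x)=y$), and likewise $\mathbf{r}$-injective and $\mathbf{r}$-surjective. *)

(* Defs.v *)
Set Implicit Arguments.

Definition img (A B : Type) (f : A -> B) (X : A -> Prop) : B -> Prop :=
  fun y => exists x, X x /\ y = f x.

Record RQF := {
  car :> Type;
  le : car -> car -> Prop;
  sup : (car -> Prop) -> car;
  meet : car -> car -> car;
  mul : car -> car -> car;
  one : car;
  star : car -> car;
  plus : car -> car;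
  le_refl : forall a, le a a;
  le_trans : forall a b c, le a b -> le b c -> le a c;
  le_antisym : forall a b, le a b -> le b a -> a = b;
  sup_ub : forall X a, X a -> le a (sup X);
  sup_lub : forall X b, (forall a, X a -> le a b) -> le (sup X) b;
  meet_lbl : forall a b, le (meet a b) a;
  meet_lbr : forall a b, le (meet a b) b;
  meet_glb : forall a b c, le c a -> le c b -> le c (meet a b);
  meet_sup : forall a X, meet a (sup X) = sup (img (meet a) X);
  mulA : forall a b c, mul a (mul b c) = mul (mul a b) c;
  mul1l : forall a, mul one a = a;
  mul1r : forall a, mul a one = a;
  mul_supr : forall a X, mul a (sup X) = sup (img (mul a) X);
  mul_supl : forall a X, mul (sup X) a = sup (img (fun x => mul x a) X);
  (* the projections e^down form a commutative subsemigroup of idempotents *)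
  proj_mul : forall p q, le p one -> le q one -> le (mul p q) one;
  proj_comm : forall p q, le p one -> le q one -> mul p q = mul q p;
  proj_idem : forall p, le p one -> mul p p = p;
  star_sup : forall X, star (sup X) = sup (img star X);
  plus_sup : forall X, plus (sup X) = sup (img plus X);
  star_proj : forall a, le (star a) one;
  plus_proj : forall a, le (plus a) one;
  star_fix : forall p, le p one -> star p = p;
  plus_fix : forall p, le p one -> plus p = p;
  mul_star : forall a, mul a (star a) = a;
  plus_mul : forall a, mul (plus a) a = a;
  star_mulE : forall a b, star (mul a b) = star (mul (star a) b);
  plus_mulE : forall a b, plus (mul a b) = plus (mul a (plus b));
  top_pisom : exists X : car -> Prop,
      (forall a, X a -> forall b, le b a -> b = mul (plus b) a /\ b = mul a (star b))
      /\ sup X = sup (fun _ => True);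
  pisom_mul : forall a b,
      (forall c, le c a -> c = mul (plus c) a /\ c = mul a (star c)) ->
      (forall c, le c b -> c = mul (plus c) b /\ c = mul b (star c)) ->
      (forall c, le c (mul a b) -> c = mul (plus c) (mul a b) /\ c = mul (mul a b) (star c))
}.

Arguments le {r}.
Arguments sup {r}.
Arguments meet {r}.
Arguments mul {r}.
Arguments one {r}.
Arguments star {r}.
Arguments plus {r}.

Section Q.
Context {Q : RQF}.

Definition top : Q := sup (fun _ => True).
Definition bot : Q := sup (fun _ => False).

Definition pisom (a : Q) : Prop :=
  forall b, le b a -> b = mul (plus b) a /\ b = mul a (star b).

Definition cpf (A : Q -> Prop) : Prop :=
  (exists a, A a) /\
  (forall a b, A a -> le a b -> A b) /\
  (forall a b, A a -> A b -> A (meet a b)) /\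
  ~ A bot /\
  (forall X, A (sup X) -> exists a, X a /\ A a).

Definition dom (A : Q -> Prop) : Q -> Prop := fun x => exists a, A a /\ le (star a) x.
Definition rng (A : Q -> Prop) : Q -> Prop := fun x => exists a, A a /\ le (plus a) x.
(* the product A . B (only meaningful when dom A = rng B) *)
Definition cprod (A B : Q -> Prop) : Q -> Prop :=
  fun x => exists a b, A a /\ B b /\ le (mul a b) x.
Definition is_ident (A : Q -> Prop) : Prop := cpf A /\ dom A = A.

(** topology on C(Q) with base X_a = {A | a in A}, a a partial isometry:
    U is open iff it is a union of basic opens *)
Definition isOpen (U : (Q -> Prop) -> Prop) : Prop :=
  forall A, cpf A -> U A ->
    exists a, pisom a /\ A a /\ (forall A', cpf A' -> A' a -> U A').
End Q.

Definition rqf_morph (R S : RQF) (f : R -> S) : Prop :=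
  (forall a b, f (mul a b) = mul (f a) (f b)) /\
  (forall X, f (sup X) = sup (img f X)) /\
  (forall a b, f (meet a b) = meet (f a) (f b)) /\
  (forall a, f (star a) = star (f a)) /\
  (forall a, f (plus a) = plus (f a)) /\
  f (@top R) = @top S /\
  f one = one /\
  (forall a : R, pisom a -> pisom (f a)).

Definition preim (R S : RQF) (f : R -> S) (B : S -> Prop) : R -> Prop :=
  fun x => B (f x).

(** F : C(S) -> C(R) (given as a function on sets, considered on cpfs) is a
    continuous covering functor *)
Definition is_functor (R S : RQF) (F : (S -> Prop) -> (R -> Prop)) : Prop :=
  (forall B, cpf B -> cpf (F B)) /\
  (forall B, cpf B -> dom (F B) = F (dom B)) /\
  (forall B, cpf B -> rng (F B) = F (rng B)) /\
  (forall B1 B2, cpf B1 -> cpf B2 -> dom B1 = rng B2 ->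
     F (cprod B1 B2) = cprod (F B1) (F B2)).

Definition is_covering (R S : RQF) (F : (S -> Prop) -> (R -> Prop)) : Prop :=
  (forall x y, cpf x -> cpf y -> F x = F y -> dom x = dom y -> x = y) /\
  (forall e y, is_ident e -> cpf y -> F e = dom y ->
     exists x, cpf x /\ dom x = e /\ F x = y) /\
  (forall x y, cpf x -> cpf y -> F x = F y -> rng x = rng y -> x = y) /\
  (forall e y, is_ident e -> cpf y -> F e = rng y ->
     exists x, cpf x /\ rng x = e /\ F x = y).

Definition is_continuous (R S : RQF) (F : (S -> Prop) -> (R -> Prop)) : Prop :=
  forall U, isOpen U -> isOpen (fun B => U (F B)).

Arguments rqf_morph {R S}.
Arguments preim {R S}.
Arguments is_functor {R S}.
Arguments is_covering {R S}.
Arguments is_continuous {R S}.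

(* Main.v *)
Require Import Defs.
From Stdlib Require Import FunctionalExtensionality PropExtensionality.

Lemma set_ext {T} (A B : T -> Prop) : (forall x, A x <-> B x) -> A = B.
Proof. intros H; apply functional_extensionality; intros x; apply propositional_extensionality; auto. Qed.

Section Basics.
Context {Q : RQF}.

Lemma sup_pair (a b : Q) : le a b -> sup (fun z => z = a \/ z = b) = b.
Proof. intros H. apply le_antisym.
 - apply sup_lub. intros z [-> | ->]; [exact H| apply le_refl].
 - apply sup_ub. right; reflexivity. Qed.

Lemma mul_monol (a b c : Q) : le a b -> le (mul a c) (mul b c).
Proof. intros H. rewrite <- (sup_pair _ _ H). rewrite mul_supl. apply sup_ub.
 exists a. split; [left; reflexivity| reflexivity]. Qed.

Lemma mul_monor (a b c : Q) : le a b -> le (mul c a) (mul c b).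
Proof. intros H. rewrite <- (sup_pair _ _ H). rewrite mul_supr. apply sup_ub.
 exists a. split; [left; reflexivity| reflexivity]. Qed.

Lemma mul_mono2 (a b c d : Q) : le a b -> le c d -> le (mul a c) (mul b d).
Proof. intros H1 H2. eapply le_trans; [apply mul_monol; exact H1| apply mul_monor; exact H2]. Qed.

Lemma star_mono (a b : Q) : le a b -> le (star a) (star b).
Proof. intros H. rewrite <- (sup_pair _ _ H). rewrite star_sup. apply sup_ub.
 exists a. split; [left; reflexivity| reflexivity]. Qed.

Lemma plus_mono (a b : Q) : le a b -> le (plus a) (plus b).
Proof. intros H. rewrite <- (sup_pair _ _ H). rewrite plus_sup. apply sup_ub.
 exists a. split; [left; reflexivity| reflexivity]. Qed.

Lemma star_bot_le (a : Q) : le (star bot) a.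
Proof. unfold bot. rewrite star_sup. apply sup_lub. intros z [x [[] _]]. Qed.

Lemma proj_le_l (p q : Q) : le q one -> le (mul p q) p.
Proof. intros H. eapply le_trans; [apply mul_monor; exact H| rewrite mul1r; apply le_refl]. Qed.

Lemma proj_le_r (p q : Q) : le p one -> le (mul p q) q.
Proof. intros H. eapply le_trans; [apply mul_monol; exact H| rewrite mul1l; apply le_refl]. Qed.

Lemma meet_le_mul (p q : Q) : le p one -> le q one -> le (meet p q) (mul p q).
Proof. intros Hp Hq.
 assert (Hm : le (meet p q) one) by (eapply le_trans; [apply meet_lbl| exact Hp]).
 rewrite <- (proj_idem _ _ Hm) at 1. apply mul_mono2; [apply meet_lbl| apply meet_lbr]. Qed.

Lemma proj_absorb (p q : Q) : le p q -> le q one -> mul q p = p.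
Proof. intros H1 H2. apply le_antisym.
 - apply proj_le_r; exact H2.
 - assert (Hp : le p one) by (eapply le_trans; eauto).
   rewrite <- (proj_idem _ _ Hp) at 1. apply mul_monol; exact H1. Qed.

Lemma star_mul_proj (a p : Q) : le p one -> star (mul a p) = mul (star a) p.
Proof. intros H. rewrite star_mulE. apply star_fix. apply proj_mul; [apply star_proj| exact H]. Qed.

Lemma cpf_top {A : Q -> Prop} : cpf A -> A top.
Proof. intros [[a Ha] [Hup _]]. apply Hup with a; auto. apply sup_ub; exact I. Qed.

Lemma cpf_pisom {A : Q -> Prop} : cpf A -> exists s, pisom s /\ A s.
Proof. intros HA. destruct (top_pisom Q) as [X [HX Heq]].
 assert (H : A (sup X)) by (rewrite Heq; apply (cpf_top HA)).
 destruct HA as [_ [_ [_ [_ Hcp]]]]. destruct (Hcp X H) as [s [Xs As]].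
 exists s; split; auto. exact (HX s Xs). Qed.

Lemma L_d {X Y : Q -> Prop} {s} : cpf X -> cpf Y -> pisom s -> X s -> Y s ->
  (forall z, dom X z -> dom Y z) -> forall z, X z -> Y z.
Proof.
 intros HX HY Hs Xs Ys Hd z Xz.
 destruct HX as [_ [XU [XM _]]]; destruct HY as [_ [YU [YM _]]].
 assert (Ew : exists w, X w /\ le w z /\ w = mul s (star w)).
 { exists (meet s z). split; [apply XM; auto| split; [apply meet_lbr| apply Hs; apply meet_lbl]]. }
 destruct Ew as [w [Xw [Hwz Ew]]].
 destruct (Hd (star w) (ex_intro _ w (conj Xw (le_refl _ _)))) as [a [Ya Ha]].
 assert (Ea : exists a', Y a' /\ le a' a /\ a' = mul s (star a')).
 { exists (meet a s). split; [apply YM; auto| split; [apply meet_lbl| apply Hs; apply meet_lbr]]. }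
 destruct Ea as [a' [Ya' [Ha' Ea']]].
 apply YU with a'; auto.
 apply le_trans with w; auto.
 rewrite Ea', Ew. apply mul_monor. eapply le_trans; [apply star_mono; exact Ha'| exact Ha].
Qed.

End Basics.

Lemma op_top_pisom (Q:RQF) : exists X : Q -> Prop,
  (forall a, X a -> forall b, le b a -> b = mul a (star b) /\ b = mul (plus b) a)
  /\ sup X = sup (fun _ => True).
Proof. destruct (top_pisom Q) as [X [H1 H2]]. exists X; split; auto.
 intros a Ha b Hb; destruct (H1 a Ha b Hb); split; auto. Qed.

Lemma op_pisom_mul (Q:RQF) : forall a b : Q,
 (forall c, le c a -> c = mul a (star c) /\ c = mul (plus c) a) ->
 (forall c, le c b -> c = mul b (star c) /\ c = mul (plus c) b) ->
 (forall c, le c (mul b a) -> c = mul (mul b a) (star c) /\ c = mul (plus c) (mul b a)).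
Proof. intros a b Ha Hb c Hc.
 assert (Ha' : forall c, le c a -> c = mul (plus c) a /\ c = mul a (star c))
   by (intros d Hd; destruct (Ha d Hd); split; auto).
 assert (Hb' : forall c, le c b -> c = mul (plus c) b /\ c = mul b (star c))
   by (intros d Hd; destruct (Hb d Hd); split; auto).
 destruct (pisom_mul Q b a Hb' Ha' c Hc). split; auto. Qed.

Definition opR (Q : RQF) : RQF := {|
  car := car Q; le := @le Q; sup := @sup Q; meet := @meet Q;
  mul := fun a b => @mul Q b a; one := @one Q; star := @plus Q; plus := @star Q;
  le_refl := le_refl Q; le_trans := le_trans Q; le_antisym := le_antisym Q;
  sup_ub := sup_ub Q; sup_lub := sup_lub Q; meet_lbl := meet_lbl Q;
  meet_lbr := meet_lbr Q; meet_glb := meet_glb Q; meet_sup := meet_sup Q;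
  mulA := fun a b c => eq_sym (mulA Q c b a);
  mul1l := mul1r Q; mul1r := mul1l Q;
  mul_supr := fun a X => mul_supl Q a X;
  mul_supl := fun a X => mul_supr Q a X;
  proj_mul := fun p q Hp Hq => proj_mul Q q p Hq Hp;
  proj_comm := fun p q Hp Hq => proj_comm Q q p Hq Hp;
  proj_idem := proj_idem Q;
  star_sup := plus_sup Q; plus_sup := star_sup Q;
  star_proj := plus_proj Q; plus_proj := star_proj Q;
  star_fix := plus_fix Q; plus_fix := star_fix Q;
  mul_star := plus_mul Q; plus_mul := mul_star Q;
  star_mulE := fun a b => plus_mulE Q b a;
  plus_mulE := fun a b => star_mulE Q b a;
  top_pisom := op_top_pisom Q;
  pisom_mul := op_pisom_mul Q |}.

Lemma pisom_to_op (Q : RQF) (a : Q) : pisom a -> @pisom (opR Q) a.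
Proof. intros H b Hb. destruct (H b Hb). split; auto. Qed.
Lemma pisom_of_op (Q : RQF) (a : Q) : @pisom (opR Q) a -> pisom a.
Proof. intros H b Hb. destruct (H b Hb). split; auto. Qed.

Lemma morph_op {R S : RQF} (phi : R -> S) : rqf_morph phi -> @rqf_morph (opR R) (opR S) phi.
Proof.
 intros [Hmul [Hsup [Hmeet [Hstar [Hplus [Htop [Hone Hpis]]]]]]].
 split; [intros a b; exact (Hmul b a)|].
 split; [exact Hsup|]. split; [exact Hmeet|]. split; [exact Hplus|].
 split; [exact Hstar|]. split; [exact Htop|]. split; [exact Hone|].
 intros a Ha. apply pisom_to_op. apply Hpis. apply pisom_of_op. exact Ha.
Qed.

Section Morph.
Context {R S : RQF} (phi : R -> S) (Hphi : rqf_morph phi).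

Lemma phi_mono (a b : R) : le a b -> le (phi a) (phi b).
Proof. intros H. destruct Hphi as [_ [_ [Hmeet _]]].
 assert (E : meet a b = a) by (apply le_antisym; [apply meet_lbl| apply meet_glb; [apply le_refl| exact H]]).
 rewrite <- E, Hmeet. apply meet_lbr. Qed.

Lemma phi_bot (a : S) : le (phi bot) a.
Proof. destruct Hphi as [_ [Hsup _]]. unfold bot. rewrite Hsup. apply sup_lub. intros z [x [[] _]]. Qed.

Lemma preim_cpf {B : S -> Prop} : cpf B -> cpf (preim phi B).
Proof.
 intros HB. pose proof Hphi as [Hmul [Hsup [Hmeet [Hstar [Hplus [Htop [Hone Hpis]]]]]]].
 pose proof (cpf_top HB) as Bt.
 destruct HB as [_ [BU [BM [Bbot Bcp]]]].
 split; [|split; [|split; [|split]]].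
 - exists top. unfold preim. rewrite Htop. exact Bt.
 - intros a b Ha Hab. unfold preim in *. apply BU with (phi a); auto. apply phi_mono; auto.
 - intros a b Ha Hb. unfold preim in *. rewrite Hmeet. apply BM; auto.
 - intros H. apply Bbot. apply BU with (phi bot); auto. apply phi_bot.
 - intros X HX. unfold preim in HX. rewrite Hsup in HX.
   destruct (Bcp _ HX) as [z [[x [Xx ->]] Bz]]. exists x. split; auto.
Qed.

Lemma dom_preim {B : S -> Prop} : cpf B -> dom (preim phi B) = preim phi (dom B).
Proof.
 intros HB. pose proof Hphi as [Hmul [Hsup [Hmeet [Hstar [Hplus [Htop [Hone Hpis]]]]]]].
 pose proof (cpf_top HB) as Bt.
 destruct HB as [_ [BU [BM [Bbot Bcp]]]].
 apply set_ext; intros x; split.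
 - intros [a [Ba Ha]]. exists (phi a). split; auto. rewrite <- Hstar. apply phi_mono; auto.
 - intros [b [Bb Hb]]. exists (mul top (meet x one)). split.
   + unfold preim. rewrite Hmul, Hmeet, Hone, Htop. apply BU with b; auto.
     rewrite <- (mul_star _ b) at 1.
     apply mul_mono2; [apply sup_ub; exact I| apply meet_glb; [exact Hb| apply star_proj]].
   + rewrite star_mul_proj by apply meet_lbr.
     eapply le_trans; [apply proj_le_r; apply star_proj| apply meet_lbl].
Qed.

Lemma cprod_preim (B1 B2 : S -> Prop) : cpf B1 -> cpf B2 -> dom B1 = rng B2 ->
  preim phi (cprod B1 B2) = cprod (preim phi B1) (preim phi B2).
Proof.
 intros H1 H2 Hdr.
 pose proof Hphi as [Hmul [Hsup [Hmeet [Hstar [Hplus [Htop [Hone Hpis]]]]]]].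
 pose proof H1 as [_ [U1 [M1 _]]]. pose proof H2 as [_ [U2 [M2 _]]].
 apply set_ext; intros x; split.
 - intros [b1 [b2 [Bb1 [Bb2 Hb]]]].
   destruct (cpf_pisom (preim_cpf H1)) as [s1 [Hs1 Bs1]].
   destruct (cpf_pisom (preim_cpf H2)) as [s2 [Hs2 Bs2]].
   unfold preim in Bs1, Bs2.
   assert (Ex1 : exists c1, B1 c1 /\ le c1 b1 /\ le c1 (phi s1))
     by (exists (meet b1 (phi s1)); split; [apply M1; auto| split; [apply meet_lbl| apply meet_lbr]]).
   destruct Ex1 as [c1 [Bc1 [Hc1b Hc1s]]].
   assert (Hd : rng B2 (star c1)) by (rewrite <- Hdr; exists c1; split; auto; apply le_refl).
   destruct Hd as [d [Bd Hd]].
   assert (Ex2 : exists c2, B2 c2 /\ le c2 b2 /\ le c2 (phi s2) /\ le c2 d).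
   { exists (meet (meet b2 (phi s2)) d). split; [apply M2; auto|].
     split; [eapply le_trans; apply meet_lbl|].
     split; [eapply le_trans; [apply meet_lbl| apply meet_lbr]| apply meet_lbr]. }
   destruct Ex2 as [c2 [Bc2 [Hc2b [Hc2s Hc2d]]]].
   assert (Hpc2 : le (plus c2) (star c1)) by (eapply le_trans; [apply plus_mono; exact Hc2d| exact Hd]).
   assert (Eabs : mul (star c1) c2 = c2).
   { transitivity (mul (star c1) (mul (plus c2) c2)); [rewrite plus_mul; reflexivity|].
     rewrite mulA, (proj_absorb _ _ Hpc2 (star_proj _ _)). apply plus_mul. }
   assert (Hsc : star (mul c1 c2) = star c2) by (rewrite star_mulE, Eabs; reflexivity).
   assert (Hps : pisom (mul s1 s2)) by (exact (pisom_mul R s1 s2 Hs1 Hs2)).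
   assert (Ey : exists yy, le yy x /\ yy = mul (mul s1 s2) (star yy) /\
                  phi yy = meet (mul (phi s1) (phi s2)) (phi x)).
   { exists (meet (mul s1 s2) x). split; [apply meet_lbr|]. split; [apply Hps; apply meet_lbl|].
     rewrite Hmeet, Hmul. reflexivity. }
   destruct Ey as [yy [Hyx [Ey Hpy]]].
   assert (Hphy : le (mul c1 c2) (phi yy)).
   { rewrite Hpy. apply meet_glb.
     - apply mul_mono2; auto.
     - eapply le_trans; [|exact Hb]. apply mul_mono2; auto. }
   assert (Hstr : le (star c2) (phi (star yy))) by (rewrite Hstar, <- Hsc; apply star_mono; exact Hphy).
   exists s1, (mul s2 (star yy)). split; [exact Bs1|split].
   + unfold preim. rewrite Hmul. apply U2 with c2; auto.
     assert (Hp2 : pisom (phi s2)) by (apply Hpis; exact Hs2).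
     rewrite (proj2 (Hp2 c2 Hc2s)) at 1. apply mul_monor; exact Hstr.
   + rewrite mulA, <- Ey. exact Hyx.
 - intros [a1 [a2 [B1a [B2a Ha]]]]. unfold preim, cprod.
   exists (phi a1), (phi a2). split; auto. split; auto.
   rewrite <- Hmul. apply phi_mono; auto.
Qed.

Lemma d_inj : forall x y : S -> Prop, cpf x -> cpf y -> preim phi x = preim phi y -> dom x = dom y -> x = y.
Proof.
 intros x y Hx Hy Hpre Hdom.
 pose proof Hphi as [Hmul [Hsup [Hmeet [Hstar [Hplus [Htop [Hone Hpis]]]]]]].
 destruct (cpf_pisom (preim_cpf Hx)) as [s [Hs xs]].
 assert (ys : y (phi s)) by (change (preim phi y s); rewrite <- Hpre; exact xs).
 assert (Hps : pisom (phi s)) by (apply Hpis; exact Hs).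
 apply set_ext; intros z; split.
 - apply (L_d Hx Hy Hps xs ys). intros w; rewrite Hdom; auto.
 - apply (L_d Hy Hx Hps ys xs). intros w; rewrite Hdom; auto.
Qed.

Definition liftD (e : S -> Prop) (y : R -> Prop) : S -> Prop :=
  fun z => exists a p, y a /\ e p /\ le p one /\ le (mul (phi a) p) z.

Lemma d_surj : forall e y, is_ident e -> cpf y -> preim phi e = dom y ->
     exists x, cpf x /\ dom x = e /\ preim phi x = y.
Proof.
 intros e y [He Hde] Hy Heq.
 pose proof Hphi as [Hmul [Hsup [Hmeet [Hstar [Hplus [Htop [Hone Hpis]]]]]]].
 pose proof He as [[g0 eg0] [eU [eM [ebot ecp]]]].
 pose proof Hy as [[a0 ya0] [yU [yM [ybot ycp]]]].
 assert (E1 : forall a, y a -> e (phi (star a))).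
 { intros a ya. change (preim phi e (star a)). rewrite Heq. exists a; split; auto; apply le_refl. }
 assert (E2 : forall g, e g -> e (star g)).
 { intros g eg. rewrite <- Hde. exists g; split; auto; apply le_refl. }
 assert (E3 : forall p q, e p -> e q -> le p one -> le q one -> e (mul p q)).
 { intros p q ep eq Hp Hq. apply eU with (meet p q); auto. apply meet_le_mul; auto. }
 assert (E4 : forall a p, y a -> e p -> le p one -> e (star (mul (phi a) p))).
 { intros a p ya ep Hp. rewrite star_mul_proj by auto. apply E3; auto.
   rewrite <- Hstar; auto. apply star_proj. }
 assert (Hx : cpf (liftD e y)).
 { split; [|split; [|split; [|split]]].
   - exists (mul (phi a0) (star g0)). exists a0, (star g0). split; auto. split; auto.
     split; [apply star_proj| apply le_refl].
   - intros a b [a1 [p [ya [ep [Hp Hle]]]]] Hab. exists a1, p. split; auto. split; auto.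
     split; auto. eapply le_trans; eauto.
   - intros z1 z2 [a1 [p1 [ya1 [ep1 [Hp1 H1]]]]] [a2 [p2 [ya2 [ep2 [Hp2 H2]]]]].
     exists (meet a1 a2), (mul p1 p2). split; auto. split; auto.
     split; [apply proj_mul; auto|].
     apply meet_glb.
     + eapply le_trans; [|exact H1]. apply mul_mono2; [apply phi_mono, meet_lbl| apply proj_le_l; auto].
     + eapply le_trans; [|exact H2]. apply mul_mono2; [apply phi_mono, meet_lbr| apply proj_le_r; auto].
   - intros [a [p [ya [ep [Hp Hle]]]]]. apply ebot. apply eU with (star (mul (phi a) p)).
     + apply E4; auto.
     + eapply le_trans; [apply star_mono; exact Hle| apply star_bot_le].
   - intros X [a [p [ya [ep [Hp Hle]]]]].
     destruct (cpf_pisom Hy) as [s [Hs ys]].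
     assert (Ea : exists a', y a' /\ le a' a /\ le a' s)
       by (exists (meet a s); split; [apply yM; auto| split; [apply meet_lbl| apply meet_lbr]]).
     destruct Ea as [a' [ya' [Ha'a Ha's]]].
     assert (Hu1 : le (mul (phi a') p) (sup X))
       by (eapply le_trans; [apply mul_monol, phi_mono, Ha'a| exact Hle]).
     assert (Hu2 : le (mul (phi a') p) (phi s))
       by (eapply le_trans; [apply proj_le_l; exact Hp| apply phi_mono; exact Ha's]).
     assert (Hu : le (mul (phi a') p) (sup (img (meet (phi s)) X)))
       by (rewrite <- meet_sup; apply meet_glb; auto).
     assert (eS : e (sup (img star (img (meet (phi s)) X)))).
     { rewrite <- star_sup. apply eU with (star (mul (phi a') p)); [apply E4; auto|].
       apply star_mono; auto. }
     destruct (ecp _ eS) as [v [[w [[z [Xz Ew]] Ev]] ev]].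
     subst w. subst v.
     exists z. split; auto. exists s, (star (meet (phi s) z)). split; auto. split; auto.
     split; [apply star_proj|].
     assert (Hpw : pisom (phi s)) by (apply Hpis; auto).
     rewrite <- (proj2 (Hpw (meet (phi s) z) (meet_lbl _ _ _))). apply meet_lbr. }
 assert (Hdx : dom (liftD e y) = e).
 { apply set_ext; intros z; split.
   - intros [w [[a [p [ya [ep [Hp Hle]]]]] Hw]]. apply eU with (star (mul (phi a) p)).
     + apply E4; auto.
     + eapply le_trans; [apply star_mono; exact Hle| exact Hw].
   - intros ez. rewrite <- Hde in ez. destruct ez as [g [eg Hg]].
     exists (mul (phi a0) (star g)). split.
     + exists a0, (star g). split; auto. split; auto. split; [apply star_proj| apply le_refl].
     + rewrite star_mul_proj by apply star_proj.
       eapply le_trans; [apply proj_le_r, star_proj | exact Hg]. }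
 exists (liftD e y). split; [exact Hx|split; [exact Hdx|]].
 assert (Hsub : forall a, y a -> preim phi (liftD e y) a).
 { intros a ya. exists a, (phi (star a)). split; auto. split; auto.
   split; [rewrite Hstar; apply star_proj|]. rewrite Hstar, mul_star. apply le_refl. }
 apply set_ext; intros a; split; [|apply Hsub].
 destruct (cpf_pisom Hy) as [s [Hs ys]].
 apply (L_d (preim_cpf Hx) Hy Hs (Hsub s ys) ys).
 intros z Hz. rewrite (dom_preim Hx), Hdx, Heq in Hz. exact Hz.
Qed.

Lemma cont : is_continuous (preim phi).
Proof.
 intros U HU B HB HUB.
 pose proof Hphi as [Hmul [Hsup [Hmeet [Hstar [Hplus [Htop [Hone Hpis]]]]]]].
 destruct (HU _ (preim_cpf HB) HUB) as [a [Ha [Ba HA]]].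
 exists (phi a). split; [apply Hpis; exact Ha|split; [exact Ba|]].
 intros B' HB' B'a. apply HA; [apply preim_cpf; auto | exact B'a].
Qed.

End Morph.

Lemma ident_op (Q : RQF) (e : Q -> Prop) : is_ident e -> @is_ident (opR Q) e.
Proof.
 intros [He Hde]. split; [exact He|].
 pose proof He as [_ [eU [eM _]]].
 change (rng e = e). apply set_ext; intros x; split.
 - intros [a [ea Ha]]. apply eU with (plus a); auto.
   assert (ea' : dom e a) by (rewrite Hde; exact ea).
   destruct ea' as [a' [ea' Ha']].
   assert (es : e (star a')) by (rewrite <- Hde; exists a'; split; auto; apply le_refl).
   assert (Hq : le (star a') (meet a one)) by (apply meet_glb; auto; apply star_proj).
   assert (eq : e (meet a one)) by (apply eU with (star a'); auto).
   apply eU with (meet a one); auto.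
   rewrite <- (plus_fix _ (meet a one)) by apply meet_lbr.
   apply plus_mono; apply meet_lbl.
 - intros ex. rewrite <- Hde in ex. destruct ex as [g [eg Hg]].
   exists (star g). split; [rewrite <- Hde; exists g; split; auto; apply le_refl|].
   rewrite plus_fix by apply star_proj. exact Hg.
Qed.

Theorem mainTheorem12 (R S : RQF) (phi : R -> S) :
  rqf_morph phi ->
  is_functor (preim phi) /\ is_covering (preim phi) /\ is_continuous (preim phi) /\
  (forall B, cpf B -> dom (preim phi B) = preim phi (dom B)) /\
  (forall B, cpf B -> rng (preim phi B) = preim phi (rng B)).
Proof.
 intros H.
 assert (Hop := morph_op phi H).
 assert (Dd : forall B, cpf B -> dom (preim phi B) = preim phi (dom B)) by (intros; apply dom_preim; auto).
 assert (Dr : forall B, cpf B -> rng (preim phi B) = preim phi (rng B))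
   by (intros B HB; exact (@dom_preim (opR R) (opR S) phi Hop B HB)).
 split; [|split; [|split; [|split]]]; auto.
 - split; [intros; apply preim_cpf; auto|split; [exact Dd|split; [exact Dr|]]].
   intros; apply cprod_preim; auto.
 - split; [|split; [|split]].
   + apply d_inj; auto.
   + apply d_surj; auto.
   + exact (@d_inj (opR R) (opR S) phi Hop).
   + intros e y He Hy Heq. apply (@d_surj (opR R) (opR S) phi Hop e y); auto.
     apply ident_op; exact He.
 - apply cont; auto.
Qed.
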